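(* Let $E\in M_n(\mathbb{FT})$ be an idempotent all of whose diagonal entries equal $0$. Choose a set $\{c_1,\dots,c_k\}$ of representatives of the critical classes of $E$, and let $M$ be the $k\times n$ matrix over $\mathbb{T}$, with rows indexed by $c_1,\dots,c_k$, defined by $M_{c_i,j}=0$ if $j=c_i$ and $M_{c_i,j}=-\infty$ otherwise. Then (i) $F=M\otimes E\otimes M^T$ (which is the $k\times k$ submatrix of $E$ with rows and columns indexed by $c_1,\dots,c_k$) is an idempotent of rank $k$ in $M_k(\mathbb{FT})$; (ii) the map $\phi:A\mapsto M\otimes A\otimes M^T$ restricts to an isomorphism of groups from the $\mathcal H$-class of $E$ in $M_n(\mathbb{FT})$ onto the $\mathcal H$-class of $F$ in $M_k(\mathbb{FT})$.
   Context: $\mathbb{FT}$ is $\mathbb{R}$ with $a\oplus b=\max(a,b)$, $a\otimes b=a+b$; $\mathbb{T}=\mathbb{R}\cup\{-\infty\}$ with the obvious extensions. Matrices are multiplied by $(A\otimes B)_{i,j}=\bigoplus_k A_{i,k}\otimes B_{k,j}$; $M_n(\mathbb{FT})$ is the semigroup of real $n\times n$ matrices. For $A\in M_n(\mathbb{FT})$, $\Gamma_A$ is the complete weighted digraph on $\{1,\dots,n\}$ with an edge $j\to i$ of weight $A_{i,j}$; the maximum cycle mean of $A$ is the maximum of the (arithmetic) average edge weights over all closed paths; the critical graph consists of all nodes and edges lying on a closed path whose average weight equals the maximum cycle mean; its nodes are critical nodes, and the critical classes are the strongly connected components of the critical graph (equivalence classes of critical nodes). $C(A)$ is the set of finite componentwise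 maxima of columns of $A$ shifted by real constants; the rank of an idempotent $E$ is the minimal cardinality of a generating set of $C(E)$ under componentwise max and adding real constants. Green's relations on a semigroup $S$: $a\,\mathcal{R}\,b$ iff $aS^1=bS^1$, $a\,\mathcal{L}\,b$ iff $S^1a=S^1b$, $\mathcal{H}=\mathcal{L}\cap\mathcal{R}$. *)

(* Defs.v *)
(* The real line is an arbitrary [R : realType]
   (complete archimedean ordered field, i.e. a model of the reals);
   T = R u {-oo} is MathComp's extended reals [\bar R] (we never use +oo). *)
From HB Require Import structures.
From mathcomp Require Import all_boot all_order all_algebra.
From mathcomp Require Import reals constructive_ereal.
Set Implicit Arguments. Unset Strict Implicit. Unset Printing Implicit Defensive.
Import Order.TTheory GRing.Theory Num.Theory.
Local Open Scope ring_scope.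

Section Tropical.
Variable R : realType.

Definition tmul m p q (A : 'M[\bar R]_(m, p)) (B : 'M[\bar R]_(p, q))
  : 'M[\bar R]_(m, q) :=
  \matrix_(i, j) \big[Order.max / -oo%E]_(l < p) (A i l + B l j)%E.

Definition tembed m p (A : 'M[R]_(m, p)) : 'M[\bar R]_(m, p) := map_mx (@EFin R) A.

Definition fmul n (A B : 'M[R]_n) : 'M[R]_n :=
  map_mx (@fine R) (tmul (tembed A) (tembed B)).

Definition tidempotent n (E : 'M[R]_n) : Prop := fmul E E = E.

Definition in_right_ideal n (A X : 'M[R]_n) : Prop :=
  X = A \/ exists Y, X = fmul A Y.
Definition in_left_ideal n (A X : 'M[R]_n) : Prop :=
  X = A \/ exists Y, X = fmul Y A.
Definition greenR n (A B : 'M[R]_n) : Prop :=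
  forall X, in_right_ideal A X <-> in_right_ideal B X.
Definition greenL n (A B : 'M[R]_n) : Prop :=
  forall X, in_left_ideal A X <-> in_left_ideal B X.
Definition greenH n (A B : 'M[R]_n) : Prop := greenR A B /\ greenL A B.

Definition vshift n (c : R) (v : 'cV[R]_n) : 'cV[R]_n := \col_i (c + v i 0).
Definition vmax n (v w : 'cV[R]_n) : 'cV[R]_n := \col_i Num.max (v i 0) (w i 0).
Definition vmax_seq n (v0 : 'cV[R]_n) (s : seq 'cV[R]_n) : 'cV[R]_n :=
  foldr (@vmax n) v0 s.

Definition in_tspan n (G : 'cV[R]_n -> Prop) (v : 'cV[R]_n) : Prop :=
  exists (p0 : R * 'cV[R]_n) (s : seq (R * 'cV[R]_n)),
    G p0.2 /\ (forall p, p \in s -> G p.2) /\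
    v = vmax_seq (vshift p0.1 p0.2) [seq vshift p.1 p.2 | p <- s].

Definition colspace n (E : 'M[R]_n) : 'cV[R]_n -> Prop :=
  in_tspan (fun w => exists j, w = col j E).

Definition generates n (G C : 'cV[R]_n -> Prop) : Prop :=
  (forall g, G g -> C g) /\ (forall v, C v <-> in_tspan G v).

(* minimal cardinality of a generating set of C(E); only finite generating
   sets can be minimal, so finite ones (duplicate-free sequences) suffice *)
Definition trank n (E : 'M[R]_n) (r : nat) : Prop :=
  (exists s : seq 'cV[R]_n,
      uniq s /\ size s = r /\ generates (fun v => v \in s) (colspace E)) /\
  (forall s : seq 'cV[R]_n,
      uniq s -> generates (fun v => v \in s) (colspace E) -> (r <= size s)%N).

(* closed path x :: s = [i_0; ...; i_{l-1}] with edges i_t -> i_{t+1 mod l};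
   the edge j -> i has weight A i j *)
Definition cyc_weight n (A : 'M[R]_n) (x : 'I_n) (s : seq 'I_n) : R :=
  let p := x :: s in let l := size p in
  \sum_(t < l) A (nth x p (t.+1 %% l)) (nth x p t).
Definition cyc_mean n (A : 'M[R]_n) (x : 'I_n) (s : seq 'I_n) : R :=
  cyc_weight A x s / (size (x :: s))%:R.

Definition is_max_cycle_mean n (A : 'M[R]_n) (m : R) : Prop :=
  (exists x s, cyc_mean A x s = m) /\ (forall x s, cyc_mean A x s <= m).

Definition crit_cycle n (A : 'M[R]_n) (x : 'I_n) (s : seq 'I_n) : Prop :=
  exists m, is_max_cycle_mean A m /\ cyc_mean A x s = m.

Definition crit_node n (A : 'M[R]_n) (i : 'I_n) : Prop :=
  exists x s, crit_cycle A x s /\ i \in x :: s.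

Definition crit_edge n (A : 'M[R]_n) (j i : 'I_n) : Prop :=
  exists x s, crit_cycle A x s /\
    exists t, (t < size (x :: s))%N /\ nth x (x :: s) t = j /\
              nth x (x :: s) (t.+1 %% size (x :: s)) = i.

Definition crit_walk n (A : 'M[R]_n) (x : 'I_n) (s : seq 'I_n) : Prop :=
  forall t, (t < size s)%N -> crit_edge A (nth x (x :: s) t) (nth x s t).

Definition same_crit_class n (A : 'M[R]_n) (i j : 'I_n) : Prop :=
  crit_node A i /\ crit_node A j /\
  (exists s, crit_walk A i s /\ last i s = j) /\
  (exists s, crit_walk A j s /\ last j s = i).

Definition crit_class_reps n k (A : 'M[R]_n) (c : 'I_k -> 'I_n) : Prop :=
  (forall a, crit_node A (c a)) /\
  (forall a b, same_crit_class A (c a) (c b) -> a = b) /\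
  (forall i, crit_node A i -> exists a, same_crit_class A i (c a)).

Definition selmx n k (c : 'I_k -> 'I_n) : 'M[\bar R]_(k, n) :=
  \matrix_(a, j) (if j == c a then 0%E else -oo%E).

Definition submx_c n k (c : 'I_k -> 'I_n) (A : 'M[R]_n) : 'M[R]_k :=
  \matrix_(a, b) A (c a) (c b).

End Tropical.

(* Main.v *)
Require Import Defs.
From HB Require Import structures.
From mathcomp Require Import all_boot all_order all_algebra.
From mathcomp Require Import reals constructive_ereal.
From mathcomp Require Import lra.
Import Order.TTheory GRing.Theory Num.Theory.
Local Open Scope ring_scope.
Set Implicit Arguments. Unset Strict Implicit. Unset Printing Implicit Defensive.

Section Gen.
Variable R : realType.

Lemma bigmax_seqP (I : eqType) (s : seq I) (f : I -> R) :
  (forall i, i \in s -> ((f i)%:E <= \big[Order.max/-oo%E]_(j <- s) (f j)%:E)%E) /\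
  (s = [::] \/ exists2 i, i \in s & \big[Order.max/-oo%E]_(j <- s) (f j)%:E = (f i)%:E).
Proof.
elim: s => [|a s [IH1 IH2]]; first by split=> //; left.
rewrite big_cons; split.
  move=> i; rewrite inE => /predU1P[->|/IH1 H]; first by rewrite le_max lexx.
  by rewrite le_max H orbT.
right; case: IH2 => [->|[j js ->]].
  by exists a; rewrite ?inE ?eqxx // big_nil maxeNy.
have [H|H] := leP (f a)%:E (f j)%:E.
  by exists j; rewrite // inE js orbT.
by exists a; rewrite // inE eqxx.
Qed.

Definition emax (I : finType) (f : I -> R) : R :=
  fine (\big[Order.max/-oo%E]_(i : I) (f i)%:E).

Lemma emaxP (I : finType) (i0 : I) (f : I -> R) :
  (forall i, f i <= emax f) /\ exists i, emax f = f i.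
Proof.
have [H1 [Hs|[j _ Hj]]] := bigmax_seqP (index_enum I) f.
  by have := mem_index_enum i0; rewrite Hs.
rewrite /emax Hj /=; split; last by exists j.
by move=> i; have := H1 i (mem_index_enum i); rewrite Hj lee_fin.
Qed.

Lemma emax_eq (I : finType) (f : I -> R) m :
  (forall i, f i <= m) -> (exists i, m = f i) -> emax f = m.
Proof.
move=> H1 [i Hi]; have [H2 [j Hj]] := emaxP i f.
rewrite Hj; apply/le_anti; by rewrite H1 /= Hi -Hj H2.
Qed.

Lemma fmulE n (A B : 'M[R]_n) i j :
  fmul A B i j = emax (fun l => A i l + B l j).
Proof. by rewrite /fmul /emax !mxE; congr fine; apply: eq_bigr => l _; rewrite !mxE. Qed.

Lemma fmulP n (A B : 'M[R]_n) i j :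
  (forall l, A i l + B l j <= fmul A B i j) /\ exists l, fmul A B i j = A i l + B l j.
Proof. by rewrite fmulE; apply: emaxP. Qed.

Lemma fmul_eq n (A B : 'M[R]_n) i j m :
  (forall l, A i l + B l j <= m) -> (exists l, m = A i l + B l j) -> fmul A B i j = m.
Proof. by rewrite fmulE; apply: emax_eq. Qed.

Lemma fmulA n (A B C : 'M[R]_n) : fmul (fmul A B) C = fmul A (fmul B C).
Proof.
apply/matrixP => i j.
have G1 : forall l, fmul A B i l + C l j <= fmul A (fmul B C) i j.
  move=> l; have [_ [m ->]] := fmulP A B i l.
  have [H _] := fmulP A (fmul B C) i j; apply: le_trans (H m).
  have [H' _] := fmulP B C m j; by rewrite -addrA lerD2l H'.
apply: fmul_eq => //.
have [_ [m Hm]] := fmulP A (fmul B C) i j.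
have [_ [l Hl]] := fmulP B C m j.
exists l; apply/le_anti; rewrite G1 andbT Hm Hl addrA lerD2r.
by have [H _] := fmulP A B i l; apply: H.
Qed.


Lemma greenR_of n (P Q : 'M[R]_n) :
  (exists U, P = fmul Q U) -> (exists V, Q = fmul P V) -> greenR P Q.
Proof.
move=> [U HU] [V HV] X; split.
  by case=> [->|[Y ->]]; right; [exists U | exists (fmul U Y); rewrite HU fmulA].
by case=> [->|[Y ->]]; right; [exists V | exists (fmul V Y); rewrite HV fmulA].
Qed.

Lemma greenL_of n (P Q : 'M[R]_n) :
  (exists U, P = fmul U Q) -> (exists V, Q = fmul V P) -> greenL P Q.
Proof.
move=> [U HU] [V HV] X; split.
  by case=> [->|[Y ->]]; right; [exists U | exists (fmul Y U); rewrite HU fmulA].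
by case=> [->|[Y ->]]; right; [exists V | exists (fmul Y V); rewrite HV fmulA].
Qed.

Lemma greenR_fac n (P Q : 'M[R]_n) : tidempotent Q -> greenR P Q ->
  fmul Q P = P /\ exists V, Q = fmul P V.
Proof.
move=> HQ H; split.
  case: ((H P).1 (or_introl erefl)) => [->|[U ->]]; first exact: HQ.
  by rewrite -fmulA HQ.
case: ((H Q).2 (or_introl erefl)) => [h|[V hV]]; last by exists V.
by exists P; rewrite -h HQ.
Qed.

Lemma greenL_fac n (P Q : 'M[R]_n) : tidempotent Q -> greenL P Q ->
  fmul P Q = P /\ exists V, Q = fmul V P.
Proof.
move=> HQ H; split.
  case: ((H P).1 (or_introl erefl)) => [->|[U ->]]; first exact: HQ.
  by rewrite fmulA HQ.
case: ((H Q).2 (or_introl erefl)) => [h|[V hV]]; last by exists V.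
by exists P; rewrite -h HQ.
Qed.


Lemma vshift0 m (v : 'cV[R]_m) : vshift 0 v = v.
Proof. by apply/matrixP => i j; rewrite !mxE add0r ord1. Qed.

Lemma in_tspan_ext m (G1 G2 : 'cV[R]_m -> Prop) v :
  (forall w, G1 w <-> G2 w) -> (in_tspan G1 v <-> in_tspan G2 v).
Proof.
move=> H; split => [[p0 [s [h0 [hs e]]]]|[p0 [s [h0 [hs e]]]]]; exists p0, s;
  (split; [by apply/H | split => // p hp; apply/H; exact: hs]).
Qed.

Lemma vseq_ge m (v0 : 'cV[R]_m) s i w :
  (w = v0 \/ w \in s) -> w i 0 <= vmax_seq v0 s i 0.
Proof.
elim: s => [|a s IH] H /=; first by case: H => // ->.
rewrite mxE le_max; case: H => [e|]; first by rewrite IH ?orbT //; left.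
rewrite inE => /orP [/eqP ->|h]; first by rewrite lexx.
by rewrite IH ?orbT //; right.
Qed.

Lemma vseq_eq m (v0 : 'cV[R]_m) s i :
  exists w, (w = v0 \/ w \in s) /\ vmax_seq v0 s i 0 = w i 0.
Proof.
elim: s => [|a s [w [Hw e]]] /=; first by exists v0; split; [left|].
rewrite mxE; case: (leP (a i 0) (vmax_seq v0 s i 0)) => _.
  exists w; split => //; case: Hw => [->|h]; [left | right; rewrite inE h orbT] => //.
by exists a; split => //; right; exact: mem_head.
Qed.

End Gen.

Section Main.
Variables (R : realType) (n k : nat) (E : 'M[R]_n) (c : 'I_k -> 'I_n).
Hypothesis Eidem : tidempotent E.
Hypothesis Ediag : forall i, E i i = 0.
Hypothesis Ereps : crit_class_reps E c.

Lemma Etri i l j : E i l + E l j <= E i j.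
Proof. have [H _] := fmulP E E i j; have := H l; by rewrite Eidem. Qed.

Lemma path_le (q : nat -> 'I_n) s m :
  \sum_(0 <= t < m) E (q (s + t)%N.+1) (q (s + t)%N) <= E (q (s + m)%N) (q s).
Proof.
elim: m => [|m IH]; first by rewrite big_geq // addn0 Ediag.
rewrite big_nat_recr //= addnS.
apply: le_trans (Etri _ (q (s+m)%N) _); rewrite addrC lerD2l; exact IH.
Qed.

Lemma rot_sum (f : nat -> R) l s : (forall t, f (t + l)%N = f t) ->
  \sum_(0 <= t < l) f (s + t)%N = \sum_(0 <= t < l) f t.
Proof.
move=> Hf; elim: s => [|s IH]; first by apply: eq_bigr => t _; rewrite add0n.
rewrite -IH {IH}; case: l Hf => [|l] Hf; first by rewrite !big_geq.
rewrite big_nat_recr // big_nat_recl //= addn0 -(Hf s) [RHS]addrC.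
by congr (_ + _); [apply: eq_bigr => t _|]; rewrite addSnnS.
Qed.

Definition cq (x : 'I_n) (s : seq 'I_n) (t : nat) := nth x (x :: s) (t %% size (x :: s)).

Lemma cq_per x s t : cq x s (t + size (x :: s))%N = cq x s t.
Proof. by rewrite /cq modnDr. Qed.

Lemma cq_small x s t : (t < size (x :: s))%N -> cq x s t = nth x (x :: s) t.
Proof. by move=> H; rewrite /cq modn_small. Qed.

Lemma cyc_weight_q x s : cyc_weight E x s =
  \sum_(0 <= t < size (x :: s)) E (cq x s t.+1) (cq x s t).
Proof.
rewrite /cyc_weight big_mkord; apply: eq_bigr => t _.
by rewrite [cq x s t]cq_small.
Qed.

Lemma cyc_weight_le0 x s : cyc_weight E x s <= 0.
Proof.
rewrite cyc_weight_q /= big_nat_recr //=.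
have H := path_le (cq x s) 0 (size s).
have E1 : cq x s (size s).+1 = cq x s 0.
  by have := cq_per x s 0; rewrite add0n.
rewrite E1; apply: le_trans (_ : E (cq x s (size s)) (cq x s 0) +
   E (cq x s 0) (cq x s (size s)) <= 0).
  by rewrite addrC [X in _ <= X]addrC lerD2l; exact: H.
by have := Etri (cq x s (size s)) (cq x s 0) (cq x s (size s)); rewrite Ediag.
Qed.

Lemma cyc_mean_le0 x s : cyc_mean E x s <= 0.
Proof. by rewrite /cyc_mean ler_pdivrMr ?mul0r ?cyc_weight_le0 // ltr0n. Qed.

Lemma cyc_mean1 x : cyc_mean E x [::] = 0.
Proof. by rewrite /cyc_mean /cyc_weight big_ord1 /= Ediag mul0r. Qed.

Lemma mcm0 (i : 'I_n) : is_max_cycle_mean E 0.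
Proof. split; [by exists i, [::]; rewrite cyc_mean1 | exact: cyc_mean_le0]. Qed.

Lemma mcm_eq m : is_max_cycle_mean E m -> m = 0.
Proof.
move=> [[x [s Hs]] H]; apply/le_anti; rewrite -Hs cyc_mean_le0 /=.
by rewrite Hs -(cyc_mean1 x) H.
Qed.

Lemma crit_all i : crit_node E i.
Proof.
exists i, [::]; split; last by rewrite inE.
by exists 0; split; [exact: mcm0 i | exact: cyc_mean1].
Qed.

Lemma crit_weight0 x s : crit_cycle E x s -> cyc_weight E x s = 0.
Proof.
move=> [m [/mcm_eq -> Hm]]; move: Hm; rewrite /cyc_mean => /eqP.
by rewrite mulf_eq0 invr_eq0 pnatr_eq0 /= orbF => /eqP.
Qed.

Lemma crit_edge_ge0 j i : crit_edge E j i -> 0 <= E i j + E j i.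
Proof.
move=> [x [s [Hc [t [Ht [Hj Hi]]]]]].
have W := crit_weight0 Hc; rewrite cyc_weight_q in W.
rewrite -(@rot_sum _ _ t.+1) /= in W; last first.
  by move=> u; rewrite -addSn !cq_per.
rewrite big_nat_recr //= in W.
have P := path_le (cq x s) t.+1 (size s).
have E1 : cq x s (t.+1 + size s)%N = j.
  by rewrite addSnnS cq_per cq_small.
have E2 : cq x s (t.+1 + size s)%N.+1 = i.
  by rewrite addSnnS -addSn cq_per.
rewrite E1 E2 in W; rewrite E1 in P.
have E3 : cq x s t.+1 = i by [].
rewrite E3 in P.
by rewrite -W [X in _ <= X]addrC lerD2r.
Qed.

Lemma walk_ge0 x s : crit_walk E x s -> 0 <= E (last x s) x + E x (last x s).
Proof.
elim: s x => [|y s IH] x H /=; first by rewrite Ediag addr0.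
have Hxy := crit_edge_ge0 (H 0%N isT).
have Hw : crit_walk E y s.
  move=> t Ht; have := H t.+1 Ht => /=.
  by rewrite (set_nth_default y x) ?(set_nth_default y x Ht) //= ltnW.
have := IH y Hw; set z := last y s => Hz.
have H1 := Etri z y x; have H2 := Etri x y z.
move: Hxy Hz H1 H2 => /=; lra.
Qed.

Lemma class_sum i j : same_crit_class E i j -> E i j + E j i = 0.
Proof.
move=> [_ [_ [[s [Hs Hl]] _]]]; have := walk_ge0 Hs; rewrite Hl => H.
apply/le_anti; rewrite addrC H andbT; by have := Etri j i j; rewrite Ediag.
Qed.

Lemma edge2 i j : E i j + E j i = 0 -> crit_edge E i j.
Proof.
move=> H; exists i, [:: j]; split.
  exists 0; split; first exact: mcm0 i.
  rewrite /cyc_mean /cyc_weight big_ord_recr big_ord1 /=.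
  by rewrite addrC H mul0r.
by exists 0%N.
Qed.

Lemma class_of i j : E i j + E j i = 0 -> same_crit_class E i j.
Proof.
move=> H; split; [exact: crit_all | split; [exact: crit_all | split]].
  exists [:: j]; split => //; case => // _; exact: edge2.
exists [:: i]; split => //; case => // _; apply: edge2; by rewrite addrC.
Qed.

Lemma phiE m (A : 'M[R]_n) (d : 'I_m -> 'I_n) a b : submx_c d A a b = A (d a) (d b).
Proof. by rewrite mxE. Qed.

Lemma Erep x : exists a, E x (c a) + E (c a) x = 0.
Proof.
have [_ [_ H]] := Ereps; have [a Ha] := H x (crit_all x).
by exists a; apply: class_sum.
Qed.

Lemma mul_rep (A B : 'M[R]_n) x y : fmul A E = A -> fmul E B = B ->
  (forall a, A x (c a) + B (c a) y <= fmul A B x y) /\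
  exists a, fmul A B x y = A x (c a) + B (c a) y.
Proof.
move=> HA HB; have [H1 [l Hl]] := fmulP A B x y; split => [a|]; first exact: H1.
have [a Ha] := Erep l; exists a; apply/le_anti; rewrite H1 andbT Hl.
have := (fmulP A E x (c a)).1 l; rewrite HA => h1.
have := (fmulP E B (c a) y).1 l; rewrite HB => h2.
move: Ha h1 h2; lra.
Qed.

Lemma phi_mul A B : fmul A E = A -> fmul E B = B ->
  submx_c c (fmul A B) = fmul (submx_c c A) (submx_c c B).
Proof.
move=> HA HB; apply/matrixP => a b; rewrite phiE; symmetry; apply: fmul_eq.
  by move=> d; rewrite !phiE; exact: (mul_rep (c a) (c b) HA HB).1.
have [_ [d ->]] := mul_rep (c a) (c b) HA HB; by exists d; rewrite !phiE.
Qed.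

Lemma Fidem : tidempotent (submx_c c E).
Proof.
apply/matrixP => a b; apply: fmul_eq; first by move=> d; rewrite !phiE; exact: Etri.
by exists a; rewrite !phiE Ediag add0r.
Qed.

Lemma H_phi A : greenH A E -> greenH (submx_c c A) (submx_c c E).
Proof.
move=> [HR HL]; have [hA [V hV]] := greenR_fac Eidem HR.
have [hA' [W hW]] := greenL_fac Eidem HL; split.
  apply: greenR_of; first by exists (submx_c c A); rewrite -{1}hA phi_mul.
  exists (submx_c c (fmul E (fmul V E))).
  have h1 : fmul A (fmul E (fmul V E)) = E by rewrite -fmulA hA' -fmulA -hV Eidem.
  by rewrite -{1}h1 phi_mul // -fmulA Eidem.
apply: greenL_of; first by exists (submx_c c A); rewrite -{1}hA' phi_mul.
exists (submx_c c (fmul (fmul E W) E)).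
have h1 : fmul (fmul (fmul E W) E) A = E by rewrite fmulA hA fmulA -hW Eidem.
by rewrite -{1}h1 phi_mul // fmulA Eidem.
Qed.

Lemma H_mul A B : greenH A E -> greenH B E ->
  submx_c c (fmul A B) = fmul (submx_c c A) (submx_c c B).
Proof.
move=> [_ HL] [HR _]; apply: phi_mul.
  exact: (greenL_fac Eidem HL).1.
exact: (greenR_fac Eidem HR).1.
Qed.

Lemma inj_le A B x y : fmul E A = A -> fmul A E = A -> fmul E B = B -> fmul B E = B ->
  submx_c c A = submx_c c B -> A x y <= B x y.
Proof.
move=> h1 h2 h3 h4 hAB.
have [_ [a Ha]] := mul_rep x y Eidem h1.
have [_ [b Hb]] := mul_rep (c a) y h2 Eidem.
have B1 := (mul_rep x y Eidem h3).1 a.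
have B2 := (mul_rep (c a) y h4 Eidem).1 b.
rewrite h1 in Ha; rewrite h2 in Hb; rewrite h3 in B1; rewrite h4 in B2.
have e : A (c a) (c b) = B (c a) (c b).
  by have := congr1 (fun M : 'M[R]_k => M a b) hAB; rewrite !phiE.
rewrite Ha Hb e; move: B1 B2; lra.
Qed.

Lemma H_inj A B : greenH A E -> greenH B E ->
  submx_c c A = submx_c c B -> A = B.
Proof.
move=> [HRA HLA] [HRB HLB] e.
have [h1 _] := greenR_fac Eidem HRA; have [h2 _] := greenL_fac Eidem HLA.
have [h3 _] := greenR_fac Eidem HRB; have [h4 _] := greenL_fac Eidem HLB.
apply/matrixP => x y; apply/le_anti; rewrite inj_le //=; exact: inj_le.
Qed.

Definition psi (G : 'M[R]_k) : 'M[R]_n :=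
  \matrix_(x, y) emax (fun p : 'I_k * 'I_k => E x (c p.1) + G p.1 p.2 + E (c p.2) y).

Lemma psiP (G : 'M[R]_k) x y :
  (forall a b, E x (c a) + G a b + E (c b) y <= psi G x y) /\
  exists a b, psi G x y = E x (c a) + G a b + E (c b) y.
Proof.
have [a _] := Erep x; rewrite mxE.
have [H1 [[a' b'] H2]] := emaxP (a, a)
  (fun p : 'I_k * 'I_k => E x (c p.1) + G p.1 p.2 + E (c p.2) y).
by split; [move=> a0 b0; exact: H1 (a0, b0) | exists a', b'].
Qed.

Lemma psiF : psi (submx_c c E) = E.
Proof.
apply/matrixP => x y; have [H1 [a [b Hab]]] := psiP (submx_c c E) x y.
have [a0 Ha0] := Erep x; have := H1 a0 a0; rewrite Hab !phiE Ediag addr0 => h.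
have t1 := Etri x (c a) (c b); have t2 := Etri x (c b) y.
have t3 := Etri (c a0) x y.
apply/le_anti; apply/andP; split; move: h t1 t2 t3 Ha0; lra.
Qed.

Lemma psi_mul G H :
  fmul (psi G) (psi H) = psi (fmul (fmul G (submx_c c E)) H).
Proof.
set F := submx_c c E.
apply/matrixP => x y.
have G1 : forall l, psi G x l + psi H l y <= psi (fmul (fmul G F) H) x y.
  move=> l; have [_ [a [b ->]]] := psiP G x l.
  have [_ [a' [b' ->]]] := psiP H l y.
  have h1 := (psiP (fmul (fmul G F) H) x y).1 a b'.
  have h2 := (fmulP (fmul G F) H a b').1 a'.
  have h3 := (fmulP G F a a').1 b.
  have h4 := Etri (c b) l (c a'); rewrite /F phiE in h3.
  move: h1 h2 h3 h4; lra.
apply: fmul_eq => //.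
have [_ [a [b' h]]] := psiP (fmul (fmul G F) H) x y.
have [_ [a' h1]] := fmulP (fmul G F) H a b'.
have [_ [b h2]] := fmulP G F a a'.
exists (c b); apply/le_anti; rewrite G1 andbT.
have g1 := (psiP G x (c b)).1 a b.
have g2 := (psiP H (c b) y).1 a' b'.
rewrite /F phiE in h2; rewrite Ediag in g1.
rewrite h h1 h2; move: g1 g2; lra.
Qed.

Lemma H_surj G : greenH G (submx_c c E) ->
  exists A, greenH A E /\ submx_c c A = G.
Proof.
set F := submx_c c E.
move=> [HR HL]; have [hFG [U hU]] := greenR_fac Fidem HR.
have [hGF [V hV]] := greenL_fac Fidem HL.
have e1 : fmul E (psi G) = psi G by rewrite -{1}psiF psi_mul Fidem hFG.
have e2 : fmul (psi G) E = psi G by rewrite -{1}psiF psi_mul !hGF.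
have e3 : E = fmul (psi G) (psi U) by rewrite psi_mul hGF -hU psiF.
have e4 : E = fmul (psi V) (psi G) by rewrite psi_mul fmulA hFG -hV psiF.
exists (psi G); split.
  split; [apply: greenR_of; [by exists (psi G) | by exists (psi U)]
        | apply: greenL_of; [by exists (psi G) | by exists (psi V)]].
apply/matrixP => a b; rewrite phiE.
have [H1 [a' [b' Hp]]] := psiP G (c a) (c b).
have g := H1 a b; rewrite !Ediag add0r addr0 Hp in g; rewrite Hp.
have h1 := (fmulP F G a b').1 a'; rewrite hFG /F phiE in h1.
have h2 := (fmulP G F a b).1 b'; rewrite hGF /F phiE in h2.
apply/le_anti; apply/andP; split; move: g h1 h2; lra.
Qed.

Definition Pc (v : 'cV[R]_k) := forall x b, E (c x) (c b) + v b 0 <= v x 0.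

Lemma Pc_col j : Pc (col j (submx_c c E)).
Proof. by move=> x b; rewrite !mxE; apply: Etri. Qed.

Lemma Pc_shift lam v : Pc v -> Pc (vshift lam v).
Proof. move=> H x b; rewrite !mxE; have := H x b; lra. Qed.

Lemma Pc_max v w : Pc v -> Pc w -> Pc (vmax v w).
Proof.
move=> Hv Hw x b; rewrite !mxE.
by case: (leP (v b 0) (w b 0)) => _; rewrite le_max ?Hv ?Hw ?orbT.
Qed.

Lemma Pc_seq v0 s : Pc v0 -> (forall v, v \in s -> Pc v) -> Pc (vmax_seq v0 s).
Proof.
elim: s => [|a s IH] H0 Hs //=; apply: Pc_max; first by apply: Hs; exact: mem_head.
by apply: IH => // v hv; apply: Hs; rewrite inE hv orbT.
Qed.

Lemma Pc_span G v : (forall g, G g -> Pc g) -> in_tspan G v -> Pc v.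
Proof.
move=> HG [p0 [s [Hp0 [Hs ->]]]]; apply: Pc_seq; first exact: Pc_shift (HG _ Hp0).
by move=> w /mapP [p hp ->]; exact: Pc_shift (HG _ (Hs _ hp)).
Qed.

Lemma col_ext s : generates (fun v => v \in s) (colspace (submx_c c E)) ->
  forall b, exists i : 'I_(size s), exists lam, col b (submx_c c E) = vshift lam s`_i.
Proof.
set F := submx_c c E; move=> [Hg Hc] b.
have HPc : forall g, g \in s -> Pc g.
  by move=> g /Hg; apply: Pc_span => g' [j ->]; exact: Pc_col.
have : in_tspan (fun v => v \in s) (col b F).
  apply/Hc; exists (0, col b F), [::]; split; first by exists b.
  by split => //=; rewrite vshift0.
move=> [[lam g] [s' [Hg0 [Hs' Heq]]]] /=.
have [w [Hw e]] := vseq_eq (vshift lam g) [seq vshift p.1 p.2 | p <- s'] b.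
have ge x := vseq_ge x Hw.
rewrite -Heq in e ge.
have [lam' [g' [hg' ew]]] : exists lam' g', g' \in s /\ w = vshift lam' g'.
  case: Hw => [->|/mapP [p hp ->]]; first by exists lam, g.
  by exists p.1, p.2; split => //; apply: Hs'.
rewrite ew in e ge.
have hi : (index g' s < size s)%N by rewrite index_mem.
exists (Ordinal hi), lam'; apply/matrixP => x y; rewrite ord1 /= nth_index //.
have := ge x; have := HPc _ hg' x b; move: e; rewrite !mxE Ediag => e h1 h2.
apply/le_anti; rewrite h2 andbT; move: e h1; lra.
Qed.

Lemma Ftrank : trank (submx_c c E) k.
Proof.
set F := submx_c c E.
have Huniq : forall a b, E (c a) (c b) + E (c b) (c a) = 0 -> a = b.
  by move=> a b h; have [_ [Hu _]] := Ereps; apply: Hu; apply: class_of.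
split.
  have inj : injective (fun b => col b F).
    move=> a b e; apply: Huniq.
    have h1 := congr1 (fun v : 'cV[R]_k => v a 0) e.
    have h2 := congr1 (fun v : 'cV[R]_k => v b 0) e.
    by move: h1 h2 => /=; rewrite !mxE !Ediag => <- ->; rewrite addr0.
  exists [seq col b F | b <- enum 'I_k].
  split; first by rewrite map_inj_uniq ?enum_uniq.
  split; first by rewrite size_map size_enum_ord.
  split.
    move=> g /mapP [b _ ->]; exists (0, col b F), [::]; split; first by exists b.
    by split => //=; rewrite vshift0.
  move=> v; apply: in_tspan_ext => w; split.
    by move=> [j ->]; apply: map_f; rewrite mem_enum.
  by move=> /mapP [j _ ->]; exists j.
move=> s Hu Hg; have /fin_all_exists [f Hf] := col_ext Hg.
have finj : injective f.
  move=> a b e; have [la ha] := Hf a; have [lb hb] := Hf b; rewrite e in ha.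
  apply: Huniq.
  have h1 := congr1 (fun v : 'cV[R]_k => v a 0) ha.
  have h2 := congr1 (fun v : 'cV[R]_k => v b 0) ha.
  have h3 := congr1 (fun v : 'cV[R]_k => v a 0) hb.
  have h4 := congr1 (fun v : 'cV[R]_k => v b 0) hb.
  move: h1 h2 h3 h4 => /=; rewrite !mxE !Ediag; lra.
by have := leq_card f finj; rewrite !card_ord.
Qed.

Lemma bigmax_single m (f : 'I_m -> \bar R) j0 :
  (forall j, j != j0 -> f j = -oo%E) -> \big[Order.max/-oo%E]_(j < m) f j = f j0.
Proof. by move=> H; rewrite (bigD1 j0) //= big1 ?maxeNy. Qed.

Lemma partA (A : 'M[R]_n) :
  tmul (tmul (selmx R c) (tembed A)) (selmx R c)^T = tembed (submx_c c A).
Proof.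
apply/matrixP => a b; rewrite mxE (@bigmax_single _ _ (c b)).
  rewrite !mxE eqxx adde0 (@bigmax_single _ _ (c a)); first by rewrite !mxE eqxx add0e.
  by move=> j hj; rewrite !mxE (negbTE hj) addNye.
by move=> l hl; rewrite !mxE (negbTE hl) addeNy.
Qed.
End Main.

Theorem theorem6p3 (R : realType) (n k : nat) (E : 'M[R]_n)
    (c : 'I_k -> 'I_n) :
  tidempotent E ->
  (forall i, E i i = 0) ->
  crit_class_reps E c ->
  let M := selmx R c in
  let F := submx_c c E in
  let phi := fun A : 'M[R]_n => submx_c c A in
  (* M (x) A (x) M^T is the k x k submatrix phi A (in particular F) *)
  (forall A : 'M[R]_n, tmul (tmul M (tembed A)) M^T = tembed (phi A)) /\
  (* (i) *)
  tidempotent F /\ trank F k /\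
  (* (ii) phi restricts to a group isomorphism H_E -> H_F *)
  (forall A, greenH A E -> greenH (phi A) F) /\
  (forall A B, greenH A E -> greenH B E -> phi (fmul A B) = fmul (phi A) (phi B)) /\
  (forall A B, greenH A E -> greenH B E -> phi A = phi B -> A = B) /\
  (forall G, greenH G F -> exists A, greenH A E /\ phi A = G).
Proof.
move=> Hi Hd Hr M F phi.
split; first by move=> A; exact: partA.
split; first exact: Fidem Hi Hd.
split; first exact: Ftrank Hi Hd Hr.
split; first by move=> A; exact: H_phi Hi Hd Hr A.
split; first by move=> A B; exact: H_mul Hi Hd Hr A B.
split; first by move=> A B; exact: H_inj Hi Hd Hr A B.
by move=> G; exact: H_surj Hi Hd Hr G.
Qed.
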